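(* Suppose there exist $c,d\in\mathbb{N}^+$ and $\gamma>0$ such that, as a function of $n$, $$\sup\left\{\frac{|f|_{\mathcal{C}}}{|f|_{\mathcal{U}^c}}: f\in H^n,\ |f|_{\mathcal{U}^c}\le n^d\right\}\notin O(n^{1+\gamma}).$$ Then there exist a language $L\in\mathbf{P}$ and $\tau>0$ such that no sequence of Boolean circuits $(C_n)_n$ with $C_n$ computing $L|_n$ for every $n$ has sizes $|C_n|\in O(n^{1+\tau})$.
   Context: Let $\mathcal{B}=\{0,1\}$, let $\mathcal{B}^*$ be the set of finite binary strings and $|h|$ the length of $h\in\mathcal{B}^*$. For $n\in\mathbb{N}^+$, $H^n$ is the set of all functions $\mathcal{B}^n\to\mathcal{B}$. An interpreter is a Turing machine computing a partial function $\varphi:\mathcal{B}^*\times\mathcal{B}^*\to\mathcal{B}\cup\{\bot\}$, where $\bot$ denotes non-halting (or invalid) output. For $f\in H^n$, $|f|_\varphi=\min\{|h|:\varphi(h,x)=f(x)\ \forall x\in\mathcal{B}^n\}$ ($+\infty$ if no such $h$). Turing machines have alphabet $\{0,1,b\}$ ($b$ blank), a finite state set containing an initial state and two final states accept/reject; the output is $1$ if halting in accept, $0$ if halting in reject, $\bot$ otherwise; multi-tape machines have read-only input tapes and read/write work tapes, and the transition function is a finite list of rules. $E(T)$ is a fixed prefix-free binary encoding of a machine $T$ listing its rules (of length at least 2 for every machine). For $c\in\mathbb{N}^+$, $\mathcal{U}^c$ is a time-bounded universal interpreter (a 2-input-tape, 3-work-tape machine): on $(p,x)$ with $n=|x|$,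 it checks within $n^c$ steps whether $p=E(T)u$ for a two-input-tape machine $T$ and $u\in\mathcal{B}^*$ (outputting $\bot$ if not, or if the check does not finish), then simulates $T$ on $(u,x)$ with an efficient universal simulation (Hennie–Stearns, overhead $O(t\log t)$ for $t$ simulated steps), devoting at most $n^c$ of its own steps to the simulation; it outputs $T$'s output if $T$ halts within this budget and $0$ otherwise. For fixed $p$ it runs in at most $\beta n^c$ steps for a constant $\beta$. A Boolean circuit on $n$ inputs is a DAG with a unique sink (output) whose sources are labelled by input indices in $\{1,\dots,n\}$ and whose other vertices (gates) are labelled AND, OR (two incoming edges) or NOT (one incoming edge); its size $|C|$ is its number of vertices. The circuit interpreter $\mathcal{C}$ reads a program $h=0^{\lceil\log_2 n\rceil}1\,[\text{binary expansion of } n]\,0^{|C|}1\,[\text{description of vertex } i]_{i=1}^{|C|}$, each vertex being described by its label and its parents/input index using $\max\{2\lceil\log_2|C|\rceil,\lceil\log_2 n\rceil\}$ bits beyond the label bits, so a circuit $C$ on $n$ inputs has encoding length $L(|C|,n)=2\lceil\log_2 n\rceil+2+|C|(3+\max\{2\lceil\log_2|C|\rceil,\lceil\log_2 n\rceil\})$; $\mathcal{C}(h,x)$ is the circuit's output on $x\in\mathcal{B}^n$, and $\bot$ if $h$ is malformed. Hence $|f|_{\mathcal{C}}=\min\{L(|C|,n): C \text{ computes } f\}$. A language is a subset $L\subseteq\mathcal{B}^*$, identified with its indicator function; $L|_n\in H^n$ is its restriction to inputs of length $n$. $\mathbf{P}$ is the class of languages decidable by a deterministic Turing machine in polynomial time.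 *)

(* Defs.v *)
From Stdlib Require Import Reals.
From mathcomp Require Import all_boot.

Set Implicit Arguments.
Unset Strict Implicit.
Unset Printing Implicit Defensive.

(* B^* = seq bool ; B^n = n.-tuple bool ; H^n = functions B^n -> B. *)
Definition Hn (n : nat) := n.-tuple bool -> bool.

(* An interpreter: partial function B^* x B^* -> B u {bot}; None = bot. *)
Definition interp := seq bool -> seq bool -> option bool.

Definition prog_for (phi : interp) (n : nat) (f : Hn n) (h : seq bool) : Prop :=
  forall x : n.-tuple bool, phi h (tval x) = Some (f x).

(* |f|_phi = k  (k is the minimal length of a phi-program for f).
   If f has no program (|f|_phi = +oo) no k satisfies this. *)
Definition prog_len (phi : interp) (n : nat) (f : Hn n) (k : nat) : Prop :=
  (exists h, size h = k /\ prog_for phi f h) /\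
  (forall h, prog_for phi f h -> k <= size h).

Definition language := seq bool -> bool.
Definition restrict (L : language) (n : nat) : Hn n := fun x => L (tval x).

(* Turing machines: alphabet {0,1,b} (Some false, Some true, None),     *)
(* m read-only input tapes, k read/write work tapes, states are nats,   *)
(* transition function given by a finite list of rules (first match).  *)

Definition sym := option bool.

Inductive move := MoveL | MoveR | Stay.

(* rule: (state, symbols read on the m+k tapes) ->
         (new state, symbols written on the k work tapes, m+k moves) *)
Record rule := Rule {
  r_state : nat; r_read : seq sym;
  r_next : nat; r_write : seq sym; r_moves : seq move }.

Record TM := mkTM {
  n_in : nat; n_work : nat;
  q_init : nat; q_acc : nat; q_rej : nat;
  rules : seq rule }.

Record config := Config {
  c_state : nat;
  c_inheads : seq nat;
  c_tapes : seq (nat -> sym);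
  c_wheads : seq nat }.

Definition move_head (mv : move) (h : nat) : nat :=
  match mv with MoveL => h.-1 | MoveR => h.+1 | Stay => h end.

Definition read_input (w : seq bool) (h : nat) : sym :=
  if h < size w then Some (nth false w h) else None.

Definition read_syms (T : TM) (inputs : seq (seq bool)) (c : config) : seq sym :=
  [seq read_input (nth [::] inputs i) (nth 0 (c_inheads c) i) | i <- iota 0 (n_in T)]
  ++ [seq nth (fun _ => None) (c_tapes c) j (nth 0 (c_wheads c) j) | j <- iota 0 (n_work T)].

Definition halted (T : TM) (c : config) : bool :=
  (c_state c == q_acc T) || (c_state c == q_rej T).

(* One step. Final states and configurations with no applicable rule
   do not change (the latter thus never halt: output bot). *)
Definition step (T : TM) (inputs : seq (seq bool)) (c : config) : config :=
  if halted T c then c else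
  let s := read_syms T inputs c in
  match [seq r <- rules T | (r_state r == c_state c) && (r_read r == s)] with
  | [::] => c
  | r :: _ =>
    Config (r_next r)
      [seq move_head (nth Stay (r_moves r) i) (nth 0 (c_inheads c) i) | i <- iota 0 (n_in T)]
      [seq (fun p => if p == nth 0 (c_wheads c) j then nth None (r_write r) j
                     else nth (fun _ => None) (c_tapes c) j p) | j <- iota 0 (n_work T)]
      [seq move_head (nth Stay (r_moves r) (n_in T + j)) (nth 0 (c_wheads c) j)
         | j <- iota 0 (n_work T)]
  end.

Definition init_config (T : TM) : config :=
  Config (q_init T) (nseq (n_in T) 0) (nseq (n_work T) (fun _ => None)) (nseq (n_work T) 0).

Definition run (T : TM) (inputs : seq (seq bool)) (t : nat) : config :=
  iter t (step T inputs) (init_config T).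

Definition halts_within (T : TM) (inputs : seq (seq bool)) (t : nat) : bool :=
  halted T (run T inputs t).

Definition accepts_within (T : TM) (inputs : seq (seq bool)) (t : nat) : bool :=
  c_state (run T inputs t) == q_acc T.

Definition inP (L : language) : Prop :=
  exists T : TM, n_in T = 1 /\
  exists a k : nat, forall w : seq bool,
    exists t, t <= a * (size w) ^ k + a /\ halts_within T [:: w] t /\
              (accepts_within T [:: w] t = L w).

(* E: fixed prefix-free encoding of (two-input-tape) machines, |E(T)| >= 2 *)
Definition machine_encoding (E : TM -> seq bool) : Prop :=
  (forall T, 2 <= size (E T)) /\
  (forall T T' u, n_in T = 2 -> n_in T' = 2 -> E T' = E T ++ u -> T' = T /\ u = [::]).

(* output of T on (u,x) when its run is cut after t steps: 1 if it has
   accepted, 0 otherwise (rejected, or did not halt within the budget) *)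
Definition budget_output (T : TM) (u x : seq bool) (t : nat) : bool :=
  accepts_within T [:: u; x] t.

(* Specification of U^c (for this c and encoding E):
   - outputs bot unless p = E(T)u for a two-input-tape machine T;
   - if p = E(T)u it outputs bot (check not finished in n^c steps) or
     the budget-limited output of T on (u,x), with at most n^c simulated steps;
   - it is computed (1 = accept) by a 2-input-tape, 3-work-tape machine that
     always halts within beta*n^c (+beta) steps. *)
Definition universal_interp (E : TM -> seq bool) (c : nat) (U : interp) : Prop :=
  (forall p x, (forall T u, n_in T = 2 -> p <> E T ++ u) -> U p x = None) /\
  (forall T u x, n_in T = 2 ->
     U (E T ++ u) x = None \/
     exists t, t <= (size x) ^ c /\ U (E T ++ u) x = Some (budget_output T u x t)) /\
  (exists M : TM, n_in M = 2 /\ n_work M = 3 /\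
   exists beta : nat, forall p x,
     exists t, t <= beta * (size x) ^ c + beta /\ halts_within M [:: p; x] t /\
       (accepts_within M [:: p; x] t <-> U p x = Some true)).

(* Boolean circuits (DAG in topological order, last vertex = sink).    *)

(* vertex labels; parents are referred to by their (earlier) position *)
Inductive gate :=
  | GIn of nat          (* source labelled with input index (0-based) *)
  | GAnd of nat & nat
  | GOr of nat & nat
  | GNot of nat.

Definition circuit := seq gate.

Definition parents (g : gate) : seq nat :=
  match g with
  | GIn _ => [::] | GAnd a b => [:: a; b] | GOr a b => [:: a; b] | GNot a => [:: a]
  end.

(* well-formed circuit on n inputs: nonempty, labels/parents valid (AND/OR
   have two distinct parents, edges go forward, so it is a DAG), and the
   last vertex is the unique sink (every other vertex has a child). *)
Definition wf_circuit (n : nat) (C : circuit) : Prop :=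
  0 < size C /\
  (forall i, i < size C ->
     match nth (GIn 0) C i with
     | GIn j => j < n
     | GAnd a b => [&& a < i, b < i & a != b]
     | GOr a b => [&& a < i, b < i & a != b]
     | GNot a => a < i
     end) /\
  (forall i, i.+1 < size C -> exists j, i < j < size C /\ i \in parents (nth (GIn 0) C j)).

Definition eval_gate (x : seq bool) (vals : seq bool) (g : gate) : bool :=
  match g with
  | GIn j => nth false x j
  | GAnd a b => nth false vals a && nth false vals b
  | GOr a b => nth false vals a || nth false vals b
  | GNot a => ~~ nth false vals a
  end.

Definition eval_all (C : circuit) (x : seq bool) : seq bool :=
  foldl (fun vals g => rcons vals (eval_gate x vals g)) [::] C.

Definition eval_circuit (C : circuit) (x : seq bool) : bool :=
  last false (eval_all C x).

Definition circ_size (C : circuit) : nat := size C.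

Definition circ_computes (n : nat) (C : circuit) (f : Hn n) : Prop :=
  wf_circuit n C /\ forall x : n.-tuple bool, eval_circuit C (tval x) = f x.

(* encoding length L(|C|, n); up_log 2 m = ceil(log2 m) for m >= 1 *)
Definition circ_enc_len (s n : nat) : nat :=
  2 * up_log 2 n + 2 + s * (3 + maxn (2 * up_log 2 s) (up_log 2 n)).

Definition circ_len (n : nat) (f : Hn n) (k : nat) : Prop :=
  (exists C, circ_computes C f /\ circ_enc_len (circ_size C) n = k) /\
  (forall C, circ_computes C f -> k <= circ_enc_len (circ_size C) n).

Definition ratio_sup_bigO (U : interp) (d : nat) (g : R) : Prop :=
  exists K : R, exists N : nat, forall n, N <= n -> 0 < n ->
    forall (f : Hn n) (ku kc : nat),
      prog_len U f ku -> ku <= n ^ d -> circ_len f kc ->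
      Rle (Rdiv (INR kc) (INR ku)) (Rmult K (Rpower (INR n) (Rplus R1 g))).

Definition sizes_bigO (C : nat -> circuit) (tau : R) : Prop :=
  exists K : R, exists N : nat, forall n, N <= n ->
    Rle (INR (circ_size (C n))) (Rmult K (Rpower (INR n) (Rplus R1 tau))).

(* Main.v *)
Require Import Defs.
From Stdlib Require Import Reals Lra FunctionalExtensionality.
From mathcomp Require Import all_boot zify.
Set Implicit Arguments. Unset Strict Implicit. Unset Printing Implicit Defensive.

Definition blank : nat -> sym := fun _ => None.
Definition tp (a : seq bool) : nat -> sym := fun p => read_input a p.
Definition ctape : nat -> sym := fun p => if p == 0 then Some false else None.

Definition syms3 : seq sym := [:: None; Some false; Some true].
Fixpoint allv (n : nat) : seq (seq sym) :=
  match n with 0 => [:: [::]] | n.+1 => [seq a :: v | a <- syms3, v <- allv n] end.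

Fact allv7_key : unit. Proof. exact: tt. Qed.
Definition allv7 : seq (seq sym) := locked_with allv7_key (allv 7).
Definition stay7 := [:: Stay; Stay; Stay; Stay; Stay; Stay; Stay].

Definition delta (qi : nat) (s : nat) (v : seq sym) : nat * seq sym * seq move :=
  let I := nth None v 0 in let A := nth None v 1 in let B := nth None v 2 in
  let W0 := nth None v 3 in let W1 := nth None v 4 in let W2 := nth None v 5 in
  let C := nth None v 6 in
  let wb := [:: A; B; W0; W1; W2; C] in
  match s with
  | 0 => (1, [:: A; B; W0; W1; W2; Some false], stay7)
  | 1 => match I with
         | Some true => (2, wb, [:: MoveR; Stay; Stay; Stay; Stay; Stay; Stay])
         | Some false => (3, wb, [:: MoveR; Stay; Stay; Stay; Stay; Stay; Stay])
         | None => (3, wb, stay7) end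
  | 2 => match I with
         | Some b => (1, [:: Some b; B; W0; W1; W2; C], [:: MoveR; MoveR; Stay; Stay; Stay; Stay; MoveR])
         | None => (3, wb, stay7) end
  | 3 => match C with
         | Some false => (4, wb, stay7)
         | _ => (3, wb, [:: Stay; MoveL; Stay; Stay; Stay; Stay; MoveL]) end
  | 4 => match I with
         | Some b => (4, [:: A; Some b; W0; W1; W2; C], [:: MoveR; Stay; MoveR; Stay; Stay; Stay; MoveR])
         | None => (5, wb, stay7) end
  | _ => match C with
         | Some false => (qi.+4.+2, wb, stay7)
         | _ => (5, wb, [:: Stay; Stay; MoveL; Stay; Stay; Stay; MoveL]) end
  end.

Definition mkr qi s v := Rule s v (delta qi s v).1.1 (delta qi s v).1.2 (delta qi s v).2.

Definition tr (r : rule) : rule :=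
  Rule (r_state r).+4.+2 (None :: r_read r ++ [:: Some false]) (r_next r).+4.+2
    [:: nth None (r_read r) 0; nth None (r_read r) 1; nth None (r_write r) 0;
        nth None (r_write r) 1; nth None (r_write r) 2; Some false]
    [:: Stay; nth Stay (r_moves r) 0; nth Stay (r_moves r) 1; nth Stay (r_moves r) 2;
        nth Stay (r_moves r) 3; nth Stay (r_moves r) 4; Stay].

Definition rulesT (M : TM) :=
  flatten [seq [seq mkr (q_init M) s v | v <- allv7] | s <- iota 0 6] ++ map tr (rules M).

Definition TT (M : TM) := mkTM 1 6 0 (q_acc M).+4.+2 (q_rej M).+4.+2 (rulesT M).

Lemma filter_head (T : eqType) (v : T) l : v \in l -> exists rest, [seq x <- l | x == v] = v :: rest.
Proof.
elim: l => //= a l IH; rewrite in_cons.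
case: (a =P v) => [->|Ha]; first by eexists.
rewrite (_ : (v == a) = false); last by apply/eqP => E; apply: Ha.
by apply: IH.
Qed.

Lemma mem_allv n v : size v = n -> v \in allv n.
Proof.
elim: n v => [|n IH] [|a v] //= [Hs].
have Ha : a \in syms3 by case: a => [[]|].
exact: (@allpairs_f _ _ _ (fun a v => a :: v) syms3 (allv n) a v Ha (IH _ Hs)).
Qed.

Lemma mem_allv7 v : size v = 7 -> v \in allv7.
Proof. by rewrite /allv7 unlock; apply: mem_allv. Qed.

Lemma filter_mk qi s' s v l :
  [seq r <- map (mkr qi s') l | (r_state r == s) && (r_read r == v)] =
  if s' == s then map (mkr qi s) [seq v' <- l | v' == v] else [::].
Proof.
elim: l => [|a l IH] /=; first by case: ifP.
rewrite IH; case: eqP => [->|] //=; by case: eqP.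
Qed.

Lemma filter_tr_pre l s v : s < 6 ->
  [seq r <- map tr l | (r_state r == s) && (r_read r == v)] = [::].
Proof.
move=> Hs; elim: l => //= a l ->.
have -> : ((r_state a).+4.+2 == s) = false.
  by apply/negbTE; apply: contraTneq Hs => <-.
by [].
Qed.

Lemma stepT_pre M inp c : c_state c < 6 ->
  step (TT M) inp c =
  let v := read_syms (TT M) inp c in let d := delta (q_init M) (c_state c) v in
  Config d.1.1
    [seq move_head (nth Stay d.2 i) (nth 0 (c_inheads c) i) | i <- iota 0 1]
    [seq (fun p => if p == nth 0 (c_wheads c) j then nth None d.1.2 j
                   else nth (fun _ => None) (c_tapes c) j p) | j <- iota 0 6]
    [seq move_head (nth Stay d.2 (1 + j)) (nth 0 (c_wheads c) j) | j <- iota 0 6].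
Proof.
move=> Hs.
have Hh : halted (TT M) c = false.
  rewrite /halted /=; apply/negbTE; rewrite negb_or.
  by apply/andP; split; apply: contraTneq Hs => ->.
rewrite /step Hh.
set v := read_syms (TT M) inp c.
have Hv : size v = 7 by rewrite /v /read_syms size_cat !size_map !size_iota.
have [rest Hr] := filter_head (mem_allv7 Hv).
rewrite /rulesT filter_cat filter_tr_pre // cats0 filter_flatten -map_comp.
rewrite (eq_map (fun s' => filter_mk (q_init M) s' (c_state c) v allv7)).
move: (c_state c) Hs => s Hs.
have -> : flatten [seq (if s' == s then [seq mkr (q_init M) s i | i <- [seq v' <- allv7 | v' == v]] else [::]) | s' <- iota 0 6]
  = [seq mkr (q_init M) s i | i <- [seq v' <- allv7 | v' == v]].
  by move: s Hs {Hr} => [|[|[|[|[|[|s]]]]]] //= _; rewrite ?cats0.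
by rewrite Hr.
Qed.

Arguments tp : simpl never.
Arguments ctape : simpl never.
Arguments blank : simpl never.
Arguments read_input : simpl never.

Definition pcfg s i a b ha hb hc :=
  Config s [:: i] [:: tp a; tp b; blank; blank; blank; ctape] [:: ha; hb; 0; 0; 0; hc].

Lemma wb_id (t : nat -> sym) h : (fun p => if p == h then t h else t p) = t.
Proof. by apply: functional_extensionality => p; case: eqP => [->|]. Qed.

Lemma tp_rcons a bb : (fun p => if p == size a then Some bb else tp a p) = tp (rcons a bb).
Proof.
apply: functional_extensionality => p; rewrite /tp /read_input size_rcons nth_rcons.
case: (ltngtP p (size a)) => Hp.
- by rewrite ltnS ltnW.
- by rewrite ltnS leqNgt Hp.
- by rewrite Hp ltnSn.
Qed.

Lemma ctapeS k : ctape k.+1 = None. Proof. by []. Qed.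
Lemma ctape0 : ctape 0 = Some false. Proof. by []. Qed.

Ltac stepsimp := rewrite stepT_pre //=.


Lemma st_init M w : step (TT M) [:: w] (init_config (TT M)) = pcfg 1 0 [::] [::] 0 0 0.
Proof.
rewrite stepT_pre //= /pcfg; congr Config.
have E : forall a, tp a = fun p => if p < size a then Some (nth false a p) else None by [].
have Hb : blank = tp [::] by apply: functional_extensionality => p; rewrite /tp /read_input.
rewrite -Hb; congr [:: _; _; _; _; _; _];
  apply: functional_extensionality => p; rewrite /blank /ctape //; by case: eqP.
Qed.

Lemma st1T M w i a b ha hb hc : read_input w i = Some true ->
  step (TT M) [:: w] (pcfg 1 i a b ha hb hc) = pcfg 2 i.+1 a b ha hb hc.
Proof. by move=> H; stepsimp; rewrite H /= !wb_id. Qed.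
Lemma st1F M w i a b ha hb hc : read_input w i = Some false ->
  step (TT M) [:: w] (pcfg 1 i a b ha hb hc) = pcfg 3 i.+1 a b ha hb hc.
Proof. by move=> H; stepsimp; rewrite H /= !wb_id. Qed.
Lemma st1N M w i a b ha hb hc : read_input w i = None ->
  step (TT M) [:: w] (pcfg 1 i a b ha hb hc) = pcfg 3 i a b ha hb hc.
Proof. by move=> H; stepsimp; rewrite H /= !wb_id. Qed.
Lemma st2S M w i a b hb bb : read_input w i = Some bb ->
  step (TT M) [:: w] (pcfg 2 i a b (size a) hb (size a)) = pcfg 1 i.+1 (rcons a bb) b (size a).+1 hb (size a).+1.
Proof. by move=> H; stepsimp; rewrite H /= !wb_id tp_rcons. Qed.
Lemma st2N M w i a b ha hb hc : read_input w i = None ->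
  step (TT M) [:: w] (pcfg 2 i a b ha hb hc) = pcfg 3 i a b ha hb hc.
Proof. by move=> H; stepsimp; rewrite H /= !wb_id. Qed.
Lemma st3Z M w i a b ha hb :
  step (TT M) [:: w] (pcfg 3 i a b ha hb 0) = pcfg 4 i a b ha hb 0.
Proof. by stepsimp; rewrite !wb_id. Qed.
Lemma st3S M w i a b ha hb k :
  step (TT M) [:: w] (pcfg 3 i a b ha hb k.+1) = pcfg 3 i a b ha.-1 hb k.
Proof. by stepsimp; rewrite !wb_id. Qed.
Lemma st4S M w i a b ha bb : read_input w i = Some bb ->
  step (TT M) [:: w] (pcfg 4 i a b ha (size b) (size b)) = pcfg 4 i.+1 a (rcons b bb) ha (size b).+1 (size b).+1.
Proof. by move=> H; stepsimp; rewrite H /= !wb_id tp_rcons. Qed.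
Lemma st4N M w i a b ha hb hc : read_input w i = None ->
  step (TT M) [:: w] (pcfg 4 i a b ha hb hc) = pcfg 5 i a b ha hb hc.
Proof. by move=> H; stepsimp; rewrite H /= !wb_id. Qed.
Lemma st5Z M w i a b ha hb :
  step (TT M) [:: w] (pcfg 5 i a b ha hb 0) =
  Config (q_init M).+4.+2 [:: i] [:: tp a; tp b; blank; blank; blank; ctape] [:: ha; hb; 0; 0; 0; 0].
Proof. by stepsimp; rewrite !wb_id. Qed.
Lemma st5S M w i a b ha hb k :
  step (TT M) [:: w] (pcfg 5 i a b ha hb k.+1) = pcfg 5 i a b ha hb.-1 k.
Proof. by stepsimp; rewrite !wb_id. Qed.

Arguments tp : simpl never.
Arguments ctape : simpl never.
Arguments blank : simpl never.
Arguments read_input : simpl never.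

Fixpoint dech (w : seq bool) : seq bool * seq bool :=
  match w with
  | [::] => ([::], [::])
  | false :: r => ([::], r)
  | [:: true] => ([::], [::])
  | true :: b :: r => (b :: (dech r).1, (dech r).2)
  end.
Fixpoint cs (w : seq bool) : nat :=
  match w with
  | [::] => 1 | false :: _ => 1 | [:: true] => 2 | true :: _ :: r => (cs r).+2 end.
Fixpoint ci (w : seq bool) : nat :=
  match w with
  | [::] => 0 | false :: _ => 1 | [:: true] => 1 | true :: _ :: r => (ci r).+2 end.

Lemma ri_nil w i : drop i w = [::] -> read_input w i = None.
Proof.
move=> H; rewrite /read_input; have := size_drop i w; rewrite H /= => /eqP.
by rewrite eq_sym subn_eq0 => /leq_gtF ->.
Qed.

Lemma ri_cons w i bb r : drop i w = bb :: r -> read_input w i = Some bb /\ drop i.+1 w = r.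
Proof.
move=> H; split.
- have Hs := size_drop i w; rewrite H /= in Hs.
  have Hi : i < size w by rewrite -subn_gt0 -Hs.
  have E := nth_drop i false w 0; rewrite H addn0 /= in E.
  by rewrite /read_input Hi E.
- have E := drop_drop w 1 i; rewrite H add1n /= drop0 in E.
  by rewrite -E.
Qed.

Lemma copyh_ok M w : forall r a i, drop i w = r ->
  iter (cs r) (step (TT M) [:: w]) (pcfg 1 i a [::] (size a) 0 (size a)) =
  pcfg 3 (i + ci r) (a ++ (dech r).1) [::] (size (a ++ (dech r).1)) 0 (size (a ++ (dech r).1)).
Proof.
move=> r; have [n Hn] : exists n, size r <= n by exists (size r).
elim: n r Hn => [|n IH] r Hn a i Hd.
  case: r Hn Hd => // _ Hd /=.
  by rewrite st1N ?ri_nil // addn0 cats0.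
case: r Hn Hd => [|[] [|bb r]] Hn Hd.
- by rewrite /= st1N ?ri_nil // addn0 cats0.
- have [H1 H2] := ri_cons Hd.
  by rewrite /= st1T // st2N ?ri_nil // addn1 cats0.
- have [H1 H2] := ri_cons Hd; have [H3 H4] := ri_cons H2.
  rewrite [cs _]/= !iterSr st1T //; erewrite st2S; last exact H3.
  rewrite [ci _]/= [dech _]/=.
  have Hr : size r <= n by move: Hn => /=; rewrite !ltnS; move=> H; exact: ltnW.
  have := IH r Hr (rcons a bb) i.+2 H4; rewrite size_rcons => ->.
  by rewrite cat_rcons /= !addnS !addSn.
all: have [H1 H2] := ri_cons Hd.
all: by rewrite /= st1F // addn1 cats0.
Qed.

Lemma ci_drop w : forall r i, drop i w = r -> drop (i + ci r) w = (dech r).2.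
Proof.
move=> r; have [n Hn] : exists n, size r <= n by exists (size r).
elim: n r Hn => [|n IH] r Hn i Hd.
  by case: r Hn Hd => // _ Hd /=; rewrite addn0.
case: r Hn Hd => [|[] [|bb r]] Hn Hd.
- by rewrite /= addn0.
- by have [H1 H2] := ri_cons Hd; rewrite /= addn1 H2.
- have [H1 H2] := ri_cons Hd; have [H3 H4] := ri_cons H2.
  have Hr : size r <= n by move: Hn => /=; rewrite !ltnS; move=> H; exact: ltnW.
  by rewrite /= -(IH r Hr i.+2 H4) !addnS !addSn.
all: by have [H1 H2] := ri_cons Hd; rewrite /= addn1 H2.
Qed.

Lemma rewA M w i a b hb : forall k,
  iter k.+1 (step (TT M) [:: w]) (pcfg 3 i a b k hb k) = pcfg 4 i a b 0 hb 0.
Proof.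
elim=> [|k IH]; first by rewrite /= st3Z.
by rewrite iterSr st3S.
Qed.

Lemma rewB M w i a b ha : forall k,
  iter k.+1 (step (TT M) [:: w]) (pcfg 5 i a b ha k k) =
  Config (q_init M).+4.+2 [:: i] [:: tp a; tp b; blank; blank; blank; ctape] [:: ha; 0; 0; 0; 0; 0].
Proof.
elim=> [|k IH]; first by rewrite /= st5Z.
by rewrite iterSr st5S.
Qed.

Lemma copyX M w a ha : forall r b i, drop i w = r ->
  iter (size r).+1 (step (TT M) [:: w]) (pcfg 4 i a b ha (size b) (size b)) =
  pcfg 5 (i + size r) a (b ++ r) ha (size (b ++ r)) (size (b ++ r)).
Proof.
elim=> [|bb r IH] b i Hd.
  by rewrite /= st4N ?ri_nil // addn0 cats0.
have [H1 H2] := ri_cons Hd.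
rewrite iterSr; erewrite st4S; last exact H1.
by rewrite -(size_rcons b bb) IH // cat_rcons addSnnS.
Qed.

Definition Ppre (w : seq bool) :=
  (size (dech w).2).+1 + ((size (dech w).2).+1 + ((size (dech w).1).+1 + (cs w + 1))).

Definition simStart M (w : seq bool) :=
  Config (q_init M).+4.+2 [:: ci w + size (dech w).2]
    [:: tp (dech w).1; tp (dech w).2; blank; blank; blank; ctape] [:: 0; 0; 0; 0; 0; 0].

Lemma prelude_ok M w : run (TT M) [:: w] (Ppre w) = simStart M w.
Proof.
rewrite /run /Ppre !iterD [iter 1 _ _]/= st_init.
have E := copyh_ok M (r:=w) [::] (i:=0) (drop0 w); rewrite /= add0n in E; rewrite E.
rewrite rewA.
have Hx := ci_drop (r:=w) (i:=0) (drop0 w); rewrite add0n in Hx.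
have E2 := @copyX M w (dech w).1 0 _ [::] _ Hx; rewrite cat0s in E2; rewrite E2.
by rewrite rewB.
Qed.

Lemma simStart_head w : size w <= ci w + size (dech w).2.
Proof.
have Hx := ci_drop (r:=w) (i:=0) (drop0 w); rewrite add0n in Hx.
rewrite -Hx size_drop; lia.
Qed.

Lemma dech_size w : (size (dech w).1).*2 + size (dech w).2 <= size w /\ cs w <= (size w).+1.
Proof.
have [n Hn] : exists n, size w <= n by exists (size w).
elim: n w Hn => [|n IH] w Hn.
  by case: w Hn.
case: w Hn => [|[] [|bb r]] Hn //=.
have Hr : size r <= n by move: Hn => /=; rewrite !ltnS; move=> H; exact: ltnW.
have [H1 H2] := IH r Hr; split; lia.
Qed.

Lemma Ppre_le w : Ppre w <= 3 * size w + 5.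
Proof.
have [H1 H2] := dech_size w; rewrite /Ppre; lia.
Qed.

Arguments tp : simpl never.
Arguments ctape : simpl never.
Arguments blank : simpl never.
Arguments read_input : simpl never.

Definition simT (j : nat) (h x : seq bool) (c : config) : config :=
  Config (c_state c).+4.+2 [:: j]
    [:: tp h; tp x; nth blank (c_tapes c) 0; nth blank (c_tapes c) 1; nth blank (c_tapes c) 2; ctape]
    [:: nth 0 (c_inheads c) 0; nth 0 (c_inheads c) 1; nth 0 (c_wheads c) 0;
        nth 0 (c_wheads c) 1; nth 0 (c_wheads c) 2; 0].

Lemma ri_over w j : size w <= j -> read_input w j = None.
Proof. by move=> H; rewrite /read_input ltnNge H. Qed.

Lemma read_sim M w j h x c : n_in M = 2 -> n_work M = 3 -> size w <= j ->
  read_syms (TT M) [:: w] (simT j h x c) = None :: read_syms M [:: h; x] c ++ [:: Some false].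
Proof.
move=> Hin Hw Hj; rewrite /read_syms Hin Hw /= ri_over //.
Qed.

Lemma filter_pre_sim qi s v :
  [seq r <- flatten [seq [seq mkr qi s' v0 | v0 <- allv7] | s' <- iota 0 6]
     | (r_state r == s.+4.+2) && (r_read r == v)] = [::].
Proof.
rewrite filter_flatten -map_comp.
by rewrite (eq_map (fun s' => filter_mk qi s' s.+4.+2 v allv7)).
Qed.

Lemma filter_tr l s v :
  [seq r <- map tr l | (r_state r == s.+4.+2) && (r_read r == None :: v ++ [:: Some false])] =
  map tr [seq r <- l | (r_state r == s) && (r_read r == v)].
Proof.
elim: l => //= r l ->.
rewrite eqSS !eqSS eqseq_cons /= !cats1 eqseq_rcons eqxx andbT.
by case: ifP.
Qed.

Lemma wb_id2 (a : seq bool) k : (fun p => if p == k then read_input a k else tp a p) = tp a.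
Proof. exact: (wb_id (tp a) k). Qed.

Lemma sim_step M w j h x c : n_in M = 2 -> n_work M = 3 -> size w <= j ->
  step (TT M) [:: w] (simT j h x c) = simT j h x (step M [:: h; x] c).
Proof.
move=> Hin Hw Hj.
rewrite /step.
have -> : halted (TT M) (simT j h x c) = halted M c by [].
case: (halted M c) => //.
rewrite read_sim //= /rulesT filter_cat filter_pre_sim filter_tr.
set RM := read_syms M [:: h; x] c.
case E: [seq r <- rules M | (r_state r == c_state c) && (r_read r == RM)] => [|r rest] //=.
have := filter_all (fun r => (r_state r == c_state c) && (r_read r == RM)) (rules M).
rewrite E /= => /andP [/andP [_ /eqP Hr] _].
rewrite Hr /RM /read_syms Hin Hw /=.
rewrite /simT /= !wb_id2.
rewrite (_ : (fun p => if p == 0 then Some false else ctape p) = ctape) //.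
by apply: functional_extensionality => p; case: eqP => [->|].
Qed.

Lemma sim_iter M w j h x c k : n_in M = 2 -> n_work M = 3 -> size w <= j ->
  iter k (step (TT M) [:: w]) (simT j h x c) = simT j h x (iter k (step M [:: h; x]) c).
Proof.
move=> Hin Hw Hj; elim: k => //= k ->; exact: sim_step.
Qed.

Lemma simStart_eq M w : n_in M = 2 -> n_work M = 3 ->
  simStart M w = simT (ci w + size (dech w).2) (dech w).1 (dech w).2 (init_config M).
Proof.
by move=> Hin Hw; rewrite /simStart /simT /init_config /= Hin Hw.
Qed.

Lemma run_TT M w k : n_in M = 2 -> n_work M = 3 ->
  run (TT M) [:: w] (k + Ppre w) =
  simT (ci w + size (dech w).2) (dech w).1 (dech w).2 (run M [:: (dech w).1; (dech w).2] k).
Proof.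
move=> Hin Hw.
rewrite /run iterD -/(run (TT M) [:: w] (Ppre w)) prelude_ok simStart_eq //.
by rewrite sim_iter // simStart_head.
Qed.

Definition g0 : circuit := [:: GIn 0; GNot 0; GOr 0 1; GNot 2].
Definition sh (pre : seq bool) (g : gate) : gate :=
  match g with
  | GIn j => if j < size pre then GNot (if nth false pre j then 3 else 2) else GIn (j - size pre)
  | GAnd a b => GAnd a.+4 b.+4
  | GOr a b => GOr a.+4 b.+4
  | GNot a => GNot a.+4
  end.
Definition tl2 (C : circuit) : circuit := [:: GAnd (size C).+3 2; GOr (size C).+4 3].
Definition hw pre (C : circuit) : circuit := g0 ++ (map (sh pre) C ++ tl2 C).

Definition stE (x : seq bool) := fun vals g => rcons vals (eval_gate x vals g).

Lemma size_foldl x v C : size (foldl (stE x) v C) = size v + size C.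
Proof. by elim: C v => [|g C IH] v /=; rewrite ?addn0 // IH size_rcons addSnnS. Qed.

Fact V0_key : unit. Proof. exact: tt. Qed.
Definition V0 (x : seq bool) := locked_with V0_key [:: nth false x 0; ~~ nth false x 0; true; false].

Lemma eval_sh pre x vals g :
  eval_gate x (V0 x ++ vals) (sh pre g) = eval_gate (pre ++ x) vals g.
Proof.
rewrite /V0 unlock; case: g => [j|a b|a b|a] /=.
- case: ifP => Hj /=.
    by rewrite nth_cat Hj; case: (nth false pre j).
  by rewrite nth_cat Hj.
- by [].
- by [].
- by [].
Qed.

Lemma foldl_sh pre x C vals :
  foldl (stE x) (V0 x ++ vals) (map (sh pre) C) = V0 x ++ foldl (stE (pre ++ x)) vals C.
Proof.
elim: C vals => [|g C IH] vals //=.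
by rewrite /stE rcons_cat eval_sh -IH.
Qed.

Lemma eval_hw pre x C : 0 < size C ->
  eval_circuit (hw pre C) x = eval_circuit C (pre ++ x).
Proof.
move=> HC.
rewrite /eval_circuit /eval_all /hw foldl_cat /= orbN.
rewrite foldl_cat (_ : [:: _; _; _; _] = V0 x ++ [::]); last by rewrite /V0 unlock.
rewrite (foldl_sh pre x C [::]) /= /stE.
set E := foldl _ [::] C.
have HE : size E = size C by rewrite /E size_foldl.
rewrite !last_rcons.
have HV : size (V0 x) = 4 by rewrite /V0 unlock.
have S : size (V0 x ++ E) = (size C).+4.
  rewrite size_cat HV HE; lia.
rewrite !nth_rcons S ltnn eqxx (_ : 3 < (size C).+4) //.
rewrite !nth_cat HV /= (_ : (size C).+3 < 4 = false); last by case: (size C) HC.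
have -> : nth false (V0 x) 2 = true by rewrite /V0 unlock.
have -> : nth false (V0 x) 3 = false by rewrite /V0 unlock.
rewrite andbT orbF (last_nth false) HE.
case: (size C) HC => // n _.
by have -> : n.+4 - 4 = n by lia.
Qed.

Lemma size_hw pre C : size (hw pre C) = (size C).+4.+2.
Proof. by rewrite /hw !size_cat size_map /= addnC addn2 -addn4 addnC. Qed.

Lemma nth_hw_mid pre C k : k < size C -> nth (GIn 0) (hw pre C) k.+4 = sh pre (nth (GIn 0) C k).
Proof.
move=> Hk; rewrite /hw nth_cat /= nth_cat size_map.
have -> : k.+4 - 4 = k by lia.
by rewrite Hk (nth_map (GIn 0)).
Qed.

Lemma nth_hw_t1 pre C : nth (GIn 0) (hw pre C) (size C).+4 = GAnd (size C).+3 2.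
Proof.
rewrite /hw nth_cat /= nth_cat size_map.
have -> : (size C).+4 - 4 = size C by lia.
by rewrite ltnn subnn.
Qed.

Lemma nth_hw_t2 pre C : nth (GIn 0) (hw pre C) (size C).+4.+1 = GOr (size C).+4 3.
Proof.
rewrite /hw nth_cat /= nth_cat size_map.
have -> : (size C).+4.+1 - 4 = (size C).+1 by lia.
by rewrite ltnNge leqnSn /= subSnn.
Qed.

Lemma parents_sh pre g k : k \in parents g -> k.+4 \in parents (sh pre g).
Proof.
case: g => [j|a b|a b|a] //=; rewrite !inE ?eqSS //.
Qed.

Lemma wf_hw n pre C : 0 < n -> wf_circuit (size pre + n) C -> wf_circuit n (hw pre C).
Proof.
move=> Hn [HC0 [HC1 HC2]]; split; first by rewrite size_hw.
split.
- move=> i; rewrite size_hw => Hi.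
  case: i Hi => [|[|[|[|k]]]] Hi //.
  case: (ltngtP k (size C)) => Hk.
  + rewrite nth_hw_mid //; have := HC1 k Hk.
    case: (nth (GIn 0) C k) => [j|a b|a b|a] /=.
    * case: ifP => Hj; first by case: ifP.
      move=> H; apply/ltP; move/ltP: H; move/negbT: Hj; rewrite -leqNgt => /leP; lia.
    * by rewrite !ltnS eqSS.
    * by rewrite !ltnS eqSS.
    * by rewrite !ltnS.
  + have -> : k = (size C).+1 by lia.
    rewrite nth_hw_t2 /=; repeat (apply/andP; split); lia.
  + rewrite Hk nth_hw_t1 /=; repeat (apply/andP; split); lia.
- move=> i; rewrite size_hw => Hi.
  case: i Hi => [|[|[|[|k]]]] Hi.
  + by exists 1.
  + by exists 2.
  + exists (size C).+4; rewrite nth_hw_t1 /= !inE eqxx orbT; split => //; apply/andP; split; lia.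
  + exists (size C).+4.+1; rewrite nth_hw_t2 /= !inE eqxx orbT; split => //; apply/andP; split; lia.
  + case: (ltngtP k.+1 (size C)) => Hk.
    * have [j [Hj1 Hj2]] := HC2 k Hk.
      exists j.+4; move/andP: Hj1 => [Hkj Hjs].
      rewrite nth_hw_mid //; split; last exact: parents_sh.
      apply/andP; split; lia.
    * have -> : k = size C by lia.
      exists (size C).+4.+1; rewrite nth_hw_t2 /= !inE eqxx; split => //; apply/andP; split; lia.
    * exists (size C).+4; rewrite nth_hw_t1 /= -Hk !inE eqxx; split => //; apply/andP; split; lia.
Qed.

Definition bnd (a c : nat) (w : seq bool) := a * size w ^ c + a.
Definition Lang M a c : language := fun w => accepts_within (TT M) [:: w] (bnd a c w).

Lemma iter_fix (T : Type) (f : T -> T) x k : f x = x -> iter k f x = x.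
Proof. by move=> H; elim: k => //= k ->. Qed.

Lemma halt_stable M inp t t' : halted M (run M inp t) -> t <= t' -> run M inp t' = run M inp t.
Proof.
move=> H Ht; rewrite /run -(subnK Ht) iterD -/(run M inp t).
by apply: iter_fix; rewrite /step H.
Qed.

Lemma L_props M (U : interp) beta c w : n_in M = 2 -> n_work M = 3 -> 0 < c ->
  (forall p x, exists t, t <= beta * size x ^ c + beta /\ halts_within M [:: p; x] t /\
       (accepts_within M [:: p; x] t <-> U p x = Some true)) ->
  halts_within (TT M) [:: w] (bnd (beta + 8) c w) /\
  (Lang M (beta + 8) c w <-> U (dech w).1 (dech w).2 = Some true).
Proof.
move=> Hin Hw Hc HM.
have [t [Ht [Hh Ha]]] := HM (dech w).1 (dech w).2.
have HP := Ppre_le w.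
have [Hd1 Hd2] := dech_size w.
have HX : size (dech w).2 ^ c <= size w ^ c by rewrite leq_exp2r //; lia.
have HW : size w <= size w ^ c.
  case: (size w) => // s; rewrite -{1}(expn1 s.+1); exact: leq_pexp2l.
have HbX : beta * size (dech w).2 ^ c <= beta * size w ^ c by apply: leq_mul.
set k := bnd (beta + 8) c w - Ppre w.
have Hk : bnd (beta + 8) c w = k + Ppre w by rewrite /k subnK // /bnd; nia.
have Htk : t <= k by rewrite /k /bnd; nia.
have E : run (TT M) [:: w] (bnd (beta + 8) c w) =
  simT (ci w + size (dech w).2) (dech w).1 (dech w).2 (run M [:: (dech w).1; (dech w).2] t).
  by rewrite Hk run_TT // (halt_stable Hh Htk).
split; first by rewrite /halts_within E.
by rewrite /Lang /accepts_within E -Ha.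
Qed.

Lemma Lang_inP M (U : interp) beta c : n_in M = 2 -> n_work M = 3 -> 0 < c ->
  (forall p x, exists t, t <= beta * size x ^ c + beta /\ halts_within M [:: p; x] t /\
       (accepts_within M [:: p; x] t <-> U p x = Some true)) ->
  inP (Lang M (beta + 8) c).
Proof.
move=> Hin Hw Hc HM; exists (TT M); split => //.
exists (beta + 8), c => w; exists (bnd (beta + 8) c w); split => //.
split => //; by have [] := L_props w Hin Hw Hc HM.
Qed.

Definition enc (hp : seq bool) : seq bool := flatten [seq [:: true; b] | b <- hp].

Lemma dech_enc hp y : dech (enc hp ++ false :: y) = (hp, y).
Proof. by elim: hp => //= b hp IH; rewrite IH. Qed.

Lemma size_enc hp : size (enc hp) = (size hp).*2.
Proof. by elim: hp => //= b hp IH; rewrite IH doubleS. Qed.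

Open Scope R_scope.
Lemma INR_addn m n : INR (m + n)%N = INR m + INR n.
Proof. by rewrite -plus_INR. Qed.
Lemma INR_muln m n : INR (m * n)%N = INR m * INR n.
Proof. by rewrite -mult_INR. Qed.
Lemma INR_expn m n : INR (m ^ n)%N = INR m ^ n.
Proof. rewrite -pow_INR; congr INR; elim: n => //= n IH; by rewrite expnS IH. Qed.
Lemma INR_leq m n : (m <= n)%N -> INR m <= INR n.
Proof. by move/leP; apply: le_INR. Qed.
Lemma INR_ltn m n : (m < n)%N -> INR m < INR n.
Proof. by move/ltP; apply: lt_INR. Qed.

Lemma Rpow_pos x y : 0 < Rpower x y.
Proof. rewrite /Rpower; apply: exp_pos. Qed.

Lemma Rpow_ge1 x y : 1 <= x -> 0 <= y -> 1 <= Rpower x y.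
Proof.
move=> Hx Hy; rewrite -(Rpower_O x); last lra.
by apply: Rle_Rpower.
Qed.

Lemma ln_le_pow y e : 0 < y -> 0 < e -> ln y <= Rpower y e / e.
Proof.
move=> Hy He.
have H : e * ln y <= Rpower y e.
  rewrite /Rpower; have := exp_ineq1_le (e * ln y); lra.
apply: (Rmult_le_reg_l e) => //.
rewrite /Rdiv (Rmult_comm (Rpower y e)) -Rmult_assoc Rinv_r; lra.
Qed.

Lemma ulog_bound eps (y : nat) : 0 < eps -> (1 <= y)%N ->
  INR (up_log 2 y) <= (1 + / (eps * ln 2)) * Rpower (INR y) eps.
Proof.
move=> He Hy.
have Hl2 : 0 < ln 2 by have := ln_lt_2; lra.
have HR : 1 <= Rpower (INR y) eps.
  apply: Rpow_ge1; last lra. by have := INR_leq Hy.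
have Hi : 0 < / (eps * ln 2) by apply: Rinv_0_lt_compat; nra.
case: (ltngtP y 1) => Hy1; first by lia.
- set k := up_log 2 y.
  have Hk : (0 < k)%N by rewrite /k up_log_gt0.
  have Hlt := up_log_gtn (isT : (1 < 2)%N) Hy1.
  have H1 := INR_ltn Hlt; rewrite INR_expn in H1.
  have Hyp : 0 < INR y by have := INR_ltn Hy1; simpl; lra.
  have H2 : ln (INR 2 ^ k.-1) < ln (INR y) by apply: ln_increasing => //; apply: pow_lt; simpl; lra.
  rewrite ln_pow /= in H2; last lra.
  have H3 := ln_le_pow Hyp He.
  have Ek : INR k = INR k.-1 + 1 by rewrite -{1}(prednK Hk) S_INR.
  rewrite Ek.
  have H4 : INR k.-1 * ln 2 <= Rpower (INR y) eps / eps.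
    have -> : (2 = 1 + 1) by lra. lra.
  have H5 : INR k.-1 <= Rpower (INR y) eps * / (eps * ln 2).
    apply: (Rmult_le_reg_r (ln 2)) => //.
    have -> : Rpower (INR y) eps * / (eps * ln 2) * ln 2 = Rpower (INR y) eps / eps.
      field; lra.
    lra.
  have E : (1 + / (eps * ln 2)) * Rpower (INR y) eps = Rpower (INR y) eps + Rpower (INR y) eps * / (eps * ln 2) by ring.
  rewrite E; lra.
- rewrite Hy1 up_log1 /=; apply: Rmult_le_pos; first lra.
  by apply: Rlt_le; apply: Rpow_pos.
Qed.

Lemma enc_bound_nat s n : (1 <= s)%N ->
  (circ_enc_len s n <= s * (5 + 3 * up_log 2 n + 2 * up_log 2 s))%N.
Proof.
move=> Hs; rewrite /circ_enc_len.
have Hm : (maxn (2 * up_log 2 s) (up_log 2 n) <= 2 * up_log 2 s + up_log 2 n)%N.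
  by rewrite geq_max leq_addr leq_addl.
nia.
Qed.

Lemma Rpow_le_base a b c : 0 <= c -> 0 < a -> a <= b -> Rpower a c <= Rpower b c.
Proof. move=> Hc Ha Hab; apply: Rle_Rpower_l => //; lra. Qed.

Lemma Rpow_le_exp a b c : 1 <= a -> b <= c -> Rpower a b <= Rpower a c.
Proof. by move=> Ha Hbc; apply: Rle_Rpower. Qed.

Lemma Rpow4 d : 0 <= d -> d <= 1 -> Rpower 4 (1 + d) <= 16.
Proof.
move=> H0 H1.
have -> : 16 = Rpower 4 (INR 2) by rewrite Rpower_pow /=; lra.
apply: Rpow_le_exp; [lra | simpl; lra].
Qed.

Lemma main_bound (g : R) (d : nat) (K0 : R) : 0 < g ->
  let delta := Rmin g 1 / (INR d + 1) in let tau := delta / 3 in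
  exists K, forall (n ku s kc : nat),
   (1 <= n)%N -> (1 <= ku)%N -> (ku <= n ^ d)%N ->
   INR s <= K0 * Rpower (INR (ku.*2 + 1 + n)%N) (1 + tau) ->
   (kc <= circ_enc_len (s + 6) n)%N ->
   INR kc / INR ku <= K * Rpower (INR n) (1 + g).
Proof.
move=> Hg delta tau.
have Hd1 : 1 <= INR d + 1 by have := pos_INR d; lra.
have Hmin1 : Rmin g 1 <= 1 by apply: Rmin_r.
have Hming : Rmin g 1 <= g by apply: Rmin_l.
have Hmin0 : 0 < Rmin g 1 by apply: Rmin_glb_lt; lra.
have Hdel0 : 0 < delta by apply: Rdiv_lt_0_compat; lra.
have Hdel1 : delta <= Rmin g 1.
  rewrite /delta /Rdiv -{2}(Rmult_1_r (Rmin g 1)); apply: Rmult_le_compat_l; first lra.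
  rewrite -Rinv_1; apply: Rinv_le_contravar; lra.
have Hdd : INR d * delta <= 1.
  have -> : INR d * delta = Rmin g 1 * (INR d / (INR d + 1)) by rewrite /delta; field; lra.
  have : INR d / (INR d + 1) <= 1.
    apply: (Rmult_le_reg_r (INR d + 1)); first lra.
    rewrite /Rdiv Rmult_assoc Rinv_l; lra.
  have := pos_INR d; have : 0 <= INR d / (INR d + 1).
    apply: Rmult_le_pos; [apply: pos_INR | apply: Rlt_le; apply: Rinv_0_lt_compat; lra].
  nra.
have Ht0 : 0 < tau by rewrite /tau; lra.
have Ht1 : tau <= 1 / 3 by rewrite /tau; lra.
set C1 := 1 + / (tau * ln 2).
have Hl2 : 0 < ln 2 by have := ln_lt_2; lra.
have HC1 : 1 <= C1.
  rewrite /C1; have : 0 < / (tau * ln 2) by apply: Rinv_0_lt_compat; apply: Rmult_lt_0_compat.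
  lra.
set K1 := Rabs K0 + 6.
have HK1 : 6 <= K1 by have := Rabs_pos K0; rewrite /K1; lra.
set C2 := K1 * (5 + 3 * C1 + 2 * C1 * K1).
have HC2 : 0 < C2 by rewrite /C2; nra.
exists (16 * C2) => n ku s kc Hn Hku Hkun Hs Hkc.
set m := (ku.*2 + 1 + n)%N.
set X := INR m.
have {}Hs : INR s <= K0 * Rpower X (1 + tau) by exact: Hs.
have HX : 1 <= X by rewrite /X; have := INR_leq (_ : (1 <= m)%N); apply; rewrite /m; lia.
have HnX : INR n <= X by apply: INR_leq; rewrite /m; lia.
have Hn1 : 1 <= INR n by have := INR_leq Hn.
have HP : 1 <= Rpower X (1 + tau) by apply: Rpow_ge1; lra.
set S := INR (s + 6).
have HS : S <= K1 * Rpower X (1 + tau).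
  rewrite /S INR_addn.
  have : K0 * Rpower X (1 + tau) <= Rabs K0 * Rpower X (1 + tau).
    apply: Rmult_le_compat_r; [lra | apply: Rle_abs].
  rewrite /K1 (_ : INR 6 = 6); last by simpl; lra.
  move=> H; nra.
have HS1 : 1 <= S by rewrite /S; apply: (INR_leq (_ : (1 <= s + 6)%N)); lia.
have Hun := ulog_bound Ht0 Hn.
have H6 : (1 <= s + 6)%N by rewrite addnC.
have Hus := ulog_bound Ht0 H6.
rewrite -/C1 in Hun Hus.
have Hkc' := INR_leq (leq_trans Hkc (enc_bound_nat n H6)).
rewrite [INR (_ * _)]INR_muln in Hkc'.
rewrite -/S in Hkc'.
rewrite !INR_addn in Hkc'.
have HXe : 1 <= Rpower X tau by apply: Rpow_ge1; lra.
have HX2e : 1 <= Rpower X (2 * tau) by apply: Rpow_ge1; lra.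
have Hne : Rpower (INR n) tau <= Rpower X (2 * tau).
  apply: (Rle_trans _ (Rpower X tau)); first by apply: Rpow_le_base; lra.
  apply: Rpow_le_exp; lra.
have Hse : Rpower S tau <= K1 * Rpower X (2 * tau).
  apply: (Rle_trans _ (Rpower (K1 * Rpower X (1 + tau)) tau)).
    apply: Rpow_le_base; lra.
  rewrite -Rpower_mult_distr; [|lra|apply: Rpow_pos].
  rewrite Rpower_mult.
  apply: Rmult_le_compat.
  - apply: Rlt_le; apply: Rpow_pos.
  - apply: Rlt_le; apply: Rpow_pos.
  - rewrite -{2}(Rpower_1 K1); last lra. apply: Rpow_le_exp; lra.
  - apply: Rpow_le_exp; first lra. rewrite /tau; nra.
have Hkc2 : INR kc <= C2 * Rpower X (1 + delta).
  have E : Rpower X (1 + delta) = Rpower X (1 + tau) * Rpower X (2 * tau).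
    by rewrite -Rpower_plus /tau; congr Rpower; lra.
  rewrite E.
  have H1 : INR kc <= S * (5 + 3 * (C1 * Rpower X (2 * tau)) + 2 * (C1 * (K1 * Rpower X (2 * tau)))).
    apply: (Rle_trans _ _ _ Hkc'); apply: Rmult_le_compat_l; first lra.
    simpl INR. 
    have : INR (up_log 2 n) <= C1 * Rpower X (2 * tau) by apply: (Rle_trans _ _ _ Hun); nra.
    have : INR (up_log 2 (s + 6)) <= C1 * (K1 * Rpower X (2 * tau)).
      apply: (Rle_trans _ _ _ Hus); rewrite -/S; nra.
    lra.
  apply: (Rle_trans _ _ _ H1).
  rewrite /C2.
  set Y := Rpower X (2 * tau).
  set P := Rpower X (1 + tau).
  have HSP : S <= K1 * P by [].
  have : S * (5 + 3 * (C1 * Y) + 2 * (C1 * (K1 * Y))) <= S * ((5 + 3 * C1 + 2 * C1 * K1) * Y).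
    apply: Rmult_le_compat_l; first lra.
    have -> : (5 + 3 * C1 + 2 * C1 * K1) * Y = 5 * Y + 3 * (C1 * Y) + 2 * (C1 * (K1 * Y)) by ring.
    rewrite /Y; lra.
  have : S * ((5 + 3 * C1 + 2 * C1 * K1) * Y) <= K1 * P * ((5 + 3 * C1 + 2 * C1 * K1) * Y).
    apply: Rmult_le_compat_r; last lra.
    apply: Rmult_le_pos; last by rewrite /Y; lra.
    have : 0 <= C1 * K1 by apply: Rmult_le_pos; lra.
    lra.
  move=> H2 H3; apply: (Rle_trans _ _ _ H3).
  have -> : K1 * (5 + 3 * C1 + 2 * C1 * K1) * (P * Y) = K1 * P * ((5 + 3 * C1 + 2 * C1 * K1) * Y) by ring.
  exact: H2.
have Hng : Rpower (INR n) (1 + delta) <= Rpower (INR n) (1 + g) by apply: Rpow_le_exp; lra.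
have Hku1 : 1 <= INR ku by have := INR_leq Hku.
have Hkc0 : 0 <= INR kc by apply: pos_INR.
case: (leqP ku n) => Hkn.
- have HX4 : X <= 4 * INR n.
    have : (m <= 4 * n)%N by rewrite /m; lia.
    move/INR_leq; rewrite INR_muln -/X (_ : INR 4 = 4); [lra | simpl; lra].
  have H1 : Rpower X (1 + delta) <= 16 * Rpower (INR n) (1 + delta).
    apply: (Rle_trans _ (Rpower (4 * INR n) (1 + delta))); first by apply: Rpow_le_base; lra.
    rewrite -Rpower_mult_distr; [|lra|lra].
    apply: Rmult_le_compat_r; [apply: Rlt_le; apply: Rpow_pos | apply: Rpow4; lra].
  have H2 : INR kc / INR ku <= INR kc.
    rewrite /Rdiv -{2}(Rmult_1_r (INR kc)); apply: Rmult_le_compat_l => //.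
    rewrite -Rinv_1; apply: Rinv_le_contravar; lra.
  have HC2' : 0 <= C2 by lra.
  have := Rpow_pos (INR n) (1 + delta); move=> Hp.
  nra.
- have HX4 : X <= 4 * INR ku.
    have : (m <= 4 * ku)%N by rewrite /m; lia.
    move/INR_leq; rewrite INR_muln -/X (_ : INR 4 = 4); [lra | simpl; lra].
  have H1 : Rpower X (1 + delta) <= 16 * (INR ku * Rpower (INR ku) delta).
    apply: (Rle_trans _ (Rpower (4 * INR ku) (1 + delta))); first by apply: Rpow_le_base; lra.
    rewrite -Rpower_mult_distr; [|lra|lra].
    rewrite [Rpower (INR ku) _]Rpower_plus Rpower_1; last lra.
    apply: Rmult_le_compat_r; [apply: Rlt_le; apply: Rmult_lt_0_compat; [lra|apply: Rpow_pos] | apply: Rpow4; lra].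
  have H2 : Rpower (INR ku) delta <= Rpower (INR n) (1 + g).
    apply: (Rle_trans _ (Rpower (INR (n ^ d)) delta)).
      apply: Rpow_le_base; [lra|lra|exact: INR_leq].
    rewrite INR_expn -Rpower_pow; last lra.
    rewrite Rpower_mult; apply: Rpow_le_exp; first lra.
    lra.
  have H3 : INR kc <= 16 * C2 * INR ku * Rpower (INR n) (1 + g).
    have A : C2 * Rpower X (1 + delta) <= C2 * (16 * (INR ku * Rpower (INR ku) delta)).
      apply: Rmult_le_compat_l; lra.
    have B : INR ku * Rpower (INR ku) delta <= INR ku * Rpower (INR n) (1 + g).
      apply: Rmult_le_compat_l; lra.
    have B' : 16 * C2 * (INR ku * Rpower (INR ku) delta) <= 16 * C2 * (INR ku * Rpower (INR n) (1 + g)).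
      apply: Rmult_le_compat_l; lra.
    have E1 : C2 * (16 * (INR ku * Rpower (INR ku) delta)) = 16 * C2 * (INR ku * Rpower (INR ku) delta) by ring.
    have E2 : 16 * C2 * INR ku * Rpower (INR n) (1 + g) = 16 * C2 * (INR ku * Rpower (INR n) (1 + g)) by ring.
    rewrite E2; apply: (Rle_trans _ _ _ Hkc2); rewrite -E1 in B'; exact: (Rle_trans _ _ _ A B').
  apply: (Rmult_le_reg_r (INR ku)); first lra.
  rewrite /Rdiv Rmult_assoc Rinv_l; last lra.
  rewrite Rmult_1_r; apply: (Rle_trans _ _ _ H3); right; ring.
Qed.

Lemma tau_pos g d : 0 < g -> 0 < Rmin g 1 / (INR d + 1) / 3.
Proof.
move=> Hg.
have : 0 < Rmin g 1 by apply: Rmin_glb_lt; lra.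
have := pos_INR d => H1 H2.
apply: Rdiv_lt_0_compat; last lra.
apply: Rdiv_lt_0_compat; lra.
Qed.

Close Scope R_scope.

Theorem mainTheorem13 :
  forall (E : TM -> seq bool) (U : nat -> interp),
    machine_encoding E ->
    (forall c, 0 < c -> universal_interp E c (U c)) ->
    (exists (c d : nat) (gamma : R),
        0 < c /\ 0 < d /\ Rlt R0 gamma /\ ~ ratio_sup_bigO (U c) d gamma) ->
    exists L : language, inP L /\
      exists tau : R, Rlt R0 tau /\
        ~ (exists C : nat -> circuit,
              (forall n, 0 < n -> @circ_computes n (C n) (@restrict L n)) /\
              sizes_bigO C tau).
Proof.
move=> E U HE HU [c [d [g [Hc [Hd [Hg Hnot]]]]]].
have [HU1 [HU2 [M [Hin [Hw [beta HM]]]]]] := HU c Hc.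
exists (Lang M (beta + 8) c); split; first exact: Lang_inP Hin Hw Hc HM.
exists (Rdiv (Rdiv (Rmin g R1) (Rplus (INR d) R1)) (IZR 3)); split; first exact: tau_pos.
move=> [C [HC [K0 [N0 HK]]]].
apply: Hnot.
have [K HKb] := main_bound d K0 Hg.
exists K, (maxn N0 1) => n Hn Hn0 f ku kc [[hp [Hsz Hprog]] _] Hku [_ Hmin].
have Hku1 : 0 < ku.
  rewrite -Hsz; case: hp Hprog {Hsz} => // Hprog.
  have := Hprog [tuple of nseq n false].
  rewrite HU1 // => T u _ Heq.
  have := f_equal size Heq; rewrite size_cat /=.
  have := HE.1 T; lia.
set pre := enc hp ++ [:: false].
have Hpre : size pre = (ku.*2 + 1)%N by rewrite size_cat size_enc Hsz.
set m := (size pre + n)%N.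
have Hm0 : 0 < m by rewrite /m; lia.
have [Hwf Hev] := HC m Hm0.
set Cm := C m.
have HCm0 : 0 < size Cm by case: Hwf.
have Hcomp : circ_computes (hw pre Cm) f.
  split; first exact: wf_hw.
  move=> y; rewrite eval_hw //.
  have := Hev (cat_tuple (in_tuple pre) y); rewrite /= => ->.
  rewrite /restrict /=.
  have Hw' : pre ++ tval y = enc hp ++ false :: tval y by rewrite /pre -catA.
  have [_ HL] := L_props (pre ++ tval y) Hin Hw Hc HM.
  rewrite Hw' dech_enc /= in HL; rewrite Hw'.
  have Hp := Hprog y.
  case Hf: (f y); case HLw: (Lang M (beta + 8) c (enc hp ++ false :: tval y)) => //.
  - by move: HL; rewrite HLw Hp Hf => [[_ /(_ erefl)]].
  - by move: HL; rewrite HLw Hp Hf => [[/(_ erefl)]].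
have Hkc := Hmin _ Hcomp.
rewrite /circ_size size_hw in Hkc.
have HN0 : N0 <= m by move: Hn; rewrite /m geq_max; lia.
have Hs := HK m HN0.
have Em : m = (ku.*2 + 1 + n)%N by rewrite /m Hpre.
rewrite -/Cm Em in Hs.
have E6 : (size Cm).+4.+2 = (size Cm + 6)%N by lia.
rewrite E6 in Hkc.
exact: (HKb n ku (size Cm) kc Hn0 Hku1 Hku Hs Hkc).
Qed.
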